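(* Let $\rho_{AB}$ be a density matrix on $\mathcal H_A\otimes\mathcal H_B$, let $\Phi:\mathbf L(\mathcal H_A)\to\mathbf L(\mathcal H_{A'})$ and $\Psi:\mathbf L(\mathcal H_B)\to\mathbf L(\mathcal H_{B'})$ be completely positive trace-preserving maps, and let $\sigma_{A'B'}=(\Phi\otimes\Psi)(\rho_{AB})$. Then $\mu_{\mathrm{ent}}(\rho_{AB})\geq\mu_{\mathrm{ent}}(\sigma_{A'B'})$.
   Context: All Hilbert spaces are finite-dimensional. For a bipartite density matrix $\rho_{AB}$ with reduced states $\rho_A,\rho_B$, the maximal correlation is $\mu(\rho_{AB})=\max |\mathrm{tr}(\rho_{AB}\, X_A\otimes Y_B^\dagger)|$ over $X_A\in\mathbf L(\mathcal H_A)$, $Y_B\in\mathbf L(\mathcal H_B)$ with $\mathrm{tr}(\rho_A X_A)=\mathrm{tr}(\rho_B Y_B)=0$ and $\mathrm{tr}(\rho_A X_AX_A^\dagger)=\mathrm{tr}(\rho_B Y_BY_B^\dagger)=1$. The maximal entanglement is $\mu_{\mathrm{ent}}(\rho_{AB})=\inf \max_i \mu(\tau^{(i)}_{AB})$, the infimum over all decompositions $\rho_{AB}=\sum_i p_i\tau^{(i)}_{AB}$ with $p_i\ge0$ and $\tau^{(i)}_{AB}$ density matrices on $\mathcal H_A\otimes\mathcal H_B$. *)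

(* Defs.v *)
From HB Require Import structures.
From mathcomp Require Import all_boot all_order all_algebra.
From mathcomp Require Import complex mxtens.
From mathcomp Require Import boolp classical_sets reals.

Set Implicit Arguments.
Unset Strict Implicit.
Unset Printing Implicit Defensive.

Import Order.TTheory GRing.Theory Num.Theory.
Local Open Scope ring_scope.

Section QDefs.
Variable R : realType.
Local Notation C := R[i].

Definition adj {m n : nat} (M : 'M[C]_(m, n)) : 'M[C]_(n, m) := (map_mx conjc M)^T.

Definition psd {n : nat} (M : 'M[C]_n) : Prop :=
  adj M = M /\ forall v : 'cV[C]_n, 0 <= (adj v *m M *m v) 0 0.

Definition density {n : nat} (M : 'M[C]_n) : Prop := psd M /\ \tr M = 1.

Local Unset Implicit Arguments.
Definition ptrB (dA dB : nat) (M : 'M[C]_(dA * dB)) : 'M[C]_dA :=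
  \matrix_(i, j) \sum_(k < dB) M (mxtens_index (i, k)) (mxtens_index (j, k)).
Definition ptrA (dA dB : nat) (M : 'M[C]_(dA * dB)) : 'M[C]_dB :=
  \matrix_(i, j) \sum_(k < dA) M (mxtens_index (k, i)) (mxtens_index (k, j)).

Definition maxcorr (dA dB : nat) (rho : 'M[C]_(dA * dB)) : R :=
  sup [set r : R | exists (X : 'M[C]_dA) (Y : 'M[C]_dB),
     [/\ \tr (ptrB dA dB rho *m X) = 0, \tr (ptrA dA dB rho *m Y) = 0,
         \tr (ptrB dA dB rho *m (X *m adj X)) = 1, \tr (ptrA dA dB rho *m (Y *m adj Y)) = 1
       & real_complex R r = `|\tr (rho *m (X *t adj Y))|]].

Definition maxent (dA dB : nat) (rho : 'M[C]_(dA * dB)) : R :=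
  inf [set t : R | exists (n : nat) (p : 'I_n -> R) (tau : 'I_n -> 'M[C]_(dA * dB)),
     [/\ forall i, 0 <= p i, forall i, density (tau i),
         rho = \sum_(i < n) (real_complex R (p i)) *: tau i
       & t = \big[Num.max/0]_(i < n) maxcorr dA dB (tau i)]].

Local Set Implicit Arguments.

(* (id_k (x) Phi) acting on L(C^k (x) H_A) *)
Definition ampl (k dA dA' : nat) (Phi : 'M[C]_dA -> 'M[C]_dA')
    (M : 'M[C]_(k * dA)) : 'M[C]_(k * dA') :=
  \sum_(i < k) \sum_(j < k)
     (delta_mx i j *t Phi (\matrix_(a, b) M (mxtens_index (i, a)) (mxtens_index (j, b)))).

Definition completely_positive (dA dA' : nat) (Phi : 'M[C]_dA -> 'M[C]_dA') : Prop :=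
  forall (k : nat) (M : 'M[C]_(k * dA)), psd M -> psd (ampl Phi M).

Definition trace_preserving (dA dA' : nat) (Phi : 'M[C]_dA -> 'M[C]_dA') : Prop :=
  forall X : 'M[C]_dA, \tr (Phi X) = \tr X.

Definition tensmap (dA dB dA' dB' : nat) (Phi : 'M[C]_dA -> 'M[C]_dA')
    (Psi : 'M[C]_dB -> 'M[C]_dB') (M : 'M[C]_(dA * dB)) : 'M[C]_(dA' * dB') :=
  \sum_(i < dA) \sum_(j < dA) \sum_(k < dB) \sum_(l < dB)
     M (mxtens_index (i, k)) (mxtens_index (j, l))
       *: (Phi (delta_mx i j) *t Psi (delta_mx k l)).

End QDefs.

Arguments ptrA {R} dA dB M.
Arguments ptrB {R} dA dB M.
Arguments maxcorr {R} dA dB rho.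
Arguments maxent {R} dA dB rho.

(* Main.v *)
Require Import Defs.
From HB Require Import structures.
From mathcomp Require Import all_boot all_order all_algebra.
From mathcomp Require Import complex mxtens.
From mathcomp Require Import boolp classical_sets reals.
From mathcomp Require Import ring lra.
Import Order.TTheory GRing.Theory Num.Theory.
Local Open Scope ring_scope.

Set Implicit Arguments.
Unset Strict Implicit.
Unset Printing Implicit Defensive.

Section Q.
Variable R : realType.
Local Notation C := R[i].
Local Notation tidx := mxtens_index.
Local Notation unidx := mxtens_unindex.

Lemma sum_tidx (V : nmodType) m n (F : 'I_(m * n) -> V) :
  \sum_k F k = \sum_(i < m) \sum_(j < n) F (tidx (i, j)).
Proof.
rewrite pair_big /=.
rewrite (reindex (@mxtens_index m n)) /=; last first.
  by exists (@mxtens_unindex m n) => x _; rewrite ?mxtens_indexK ?mxtens_unindexK.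
by apply: eq_bigr => -[i j].
Qed.

Lemma adjE m n (M : 'M[C]_(m, n)) i j : adj M i j = (M j i)^*%C.
Proof. by rewrite !mxE. Qed.

Lemma adjK m n (M : 'M[C]_(m, n)) : adj (adj M) = M.
Proof. by apply/matrixP => i j; rewrite !adjE conjcK. Qed.

Lemma adjD m n (M N : 'M[C]_(m, n)) : adj (M + N) = adj M + adj N.
Proof. by apply/matrixP => i j; rewrite !mxE rmorphD. Qed.

Lemma adjN m n (M : 'M[C]_(m, n)) : adj (- M) = - adj M.
Proof. by apply/matrixP => i j; rewrite !mxE rmorphN. Qed.

Lemma adjZ m n (c : C) (M : 'M[C]_(m, n)) : adj (c *: M) = c^*%C *: adj M.
Proof. by apply/matrixP => i j; rewrite !mxE rmorphM. Qed.

Lemma adj_sum m n I (r : seq I) (P : pred I) (F : I -> 'M[C]_(m, n)) :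
  adj (\sum_(i <- r | P i) F i) = \sum_(i <- r | P i) adj (F i).
Proof.
apply/matrixP => i j; rewrite adjE !summxE rmorph_sum.
by apply: eq_bigr => k _; rewrite adjE.
Qed.

Lemma adjM m n p (A : 'M[C]_(m, n)) (B : 'M[C]_(n, p)) :
  adj (A *m B) = adj B *m adj A.
Proof.
apply/matrixP => i j; rewrite adjE !mxE rmorph_sum.
by apply: eq_bigr => k _; rewrite !adjE rmorphM mulrC.
Qed.

Lemma adj1 n : adj (1 : 'M[C]_n) = 1.
Proof.
by apply/matrixP => i j; rewrite adjE !mxE eq_sym conjc_nat.
Qed.

Lemma adj_delta m n (i : 'I_m) (j : 'I_n) : adj (delta_mx i j : 'M[C]_(m, n)) = delta_mx j i.
Proof.
by apply/matrixP => a b; rewrite adjE !mxE conjc_nat andbC.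
Qed.

Lemma adj_tens m n p q (A : 'M[C]_(m, n)) (B : 'M[C]_(p, q)) :
  adj (A *t B) = adj A *t adj B.
Proof.
apply/matrixP => k l.
case: (mxtens_indexP k) => a b; case: (mxtens_indexP l) => c d.
by rewrite adjE !tensmxE !adjE rmorphM.
Qed.

Lemma tr_adj n (A : 'M[C]_n) : \tr (adj A) = (\tr A)^*%C.
Proof. rewrite /mxtrace rmorph_sum; apply: eq_bigr => i _; by rewrite adjE. Qed.

Lemma tensZl m n p q (c : C) (A : 'M[C]_(m, n)) (B : 'M[C]_(p, q)) :
  (c *: A) *t B = c *: (A *t B).
Proof.
apply/matrixP => k l.
case: (mxtens_indexP k) => a b; case: (mxtens_indexP l) => e d.
by rewrite !mxE !mxtens_indexK /= mulrA.
Qed.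

Lemma tensZr m n p q (c : C) (A : 'M[C]_(m, n)) (B : 'M[C]_(p, q)) :
  A *t (c *: B) = c *: (A *t B).
Proof.
apply/matrixP => k l.
case: (mxtens_indexP k) => a b; case: (mxtens_indexP l) => e d.
by rewrite !mxE !mxtens_indexK /= mulrCA.
Qed.

Lemma quadE n m p (V : 'M[C]_(n, m)) (M : 'M[C]_n) (W : 'M[C]_(n, p)) c d :
  (adj V *m M *m W) c d = \sum_k \sum_l (V k c)^*%C * M k l * W l d.
Proof.
rewrite mxE (exchange_big) /=; apply: eq_bigr => l _.
rewrite mxE mulr_suml; apply: eq_bigr => k _; by rewrite adjE.
Qed.

Lemma psd_herm n (M : 'M[C]_n) : psd M -> forall i j, M j i = (M i j)^*%C.
Proof. by case=> h _ i j; rewrite -{1}h adjE. Qed.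

Lemma tr1E (A : 'M[C]_1) : \tr A = A 0 0.
Proof. by rewrite /mxtrace big_ord1. Qed.

Lemma psd_tr n m (M : 'M[C]_n) (V : 'M[C]_(n, m)) : psd M -> 0 <= \tr (adj V *m M *m V).
Proof.
case=> _ h; rewrite /mxtrace; apply: sumr_ge0 => c _.
have := h (col c V); rewrite !quadE; congr (0 <= _).
by apply: eq_bigr => k _; apply: eq_bigr => l _; rewrite !mxE.
Qed.

Lemma conj_ge0_id (z : C) : 0 <= z -> z^*%C = z.
Proof. by case: z => a b /andP [/eqP e _] /=; rewrite e oppr0. Qed.


Definition blk k n (M : 'M[C]_(k * n)) (i j : 'I_k) : 'M[C]_n :=
  \matrix_(a, b) M (tidx (i, a)) (tidx (j, b)).
Definition vblk k n m (V : 'M[C]_(k * n, m)) (i : 'I_k) : 'M[C]_(n, m) :=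
  \matrix_(a, c) V (tidx (i, a)) c.

Lemma sum_delta2 k1 k2 (i : 'I_k1) (j : 'I_k2) (F : 'I_k1 -> 'I_k2 -> C) :
  \sum_(i' < k1) \sum_(j' < k2) ((i == i') && (j == j'))%:R * F i' j' = F i j.
Proof.
rewrite (bigD1 i) //= [X in _ + X]big1 => [|i' ne]; last first.
  by apply: big1 => j' _; rewrite eq_sym (negbTE ne) mul0r.
rewrite addr0 (bigD1 j) //= [X in _ + X]big1 => [|j' ne]; last first.
  by rewrite eq_sym (negbTE ne) andbF mul0r.
by rewrite !eqxx mul1r addr0.
Qed.

Lemma amplE k dA dA' (Phi : 'M[C]_dA -> 'M[C]_dA') (M : 'M[C]_(k * dA)) i a j b :
  ampl Phi M (tidx (i, a)) (tidx (j, b)) = Phi (blk M i j) a b.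
Proof.
rewrite /ampl summxE.
under eq_bigr => i' _ do rewrite summxE.
under eq_bigr => i' _ do under eq_bigr => j' _ do rewrite tensmxE mxE.
by rewrite (sum_delta2 i j (fun i' j' => Phi (blk M i' j') a b)).
Qed.

Lemma blk_ampl k dA dA' (Phi : 'M[C]_dA -> 'M[C]_dA') (M : 'M[C]_(k * dA)) i j :
  blk (ampl Phi M) i j = Phi (blk M i j).
Proof. by apply/matrixP => a b; rewrite mxE amplE. Qed.

Lemma QB k n m (M : 'M[C]_(k * n)) (V : 'M[C]_(k * n, m)) :
  \tr (adj V *m M *m V) =
  \sum_i \sum_j \tr (adj (vblk V i) *m blk M i j *m vblk V j).
Proof.
rewrite /mxtrace.
transitivity (\sum_c \sum_i \sum_a \sum_j \sum_b
   (V (tidx (i, a)) c)^*%C * M (tidx (i, a)) (tidx (j, b)) * V (tidx (j, b)) c).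
  apply: eq_bigr => c _; rewrite quadE sum_tidx; apply: eq_bigr => i _.
  by apply: eq_bigr => a _; rewrite sum_tidx.
rewrite exchange_big; apply: eq_bigr => i _.
under eq_bigr => c _ do rewrite exchange_big.
rewrite exchange_big; apply: eq_bigr => j _; apply: eq_bigr => c _.
rewrite quadE; apply: eq_bigr => a _; apply: eq_bigr => b _.
by rewrite !mxE.
Qed.

Definition Nmat k n (rho : 'M[C]_n) (G : 'I_k -> 'M[C]_n) : 'M[C]_(k * n) :=
  \matrix_(kk, ll) (adj (G (unidx kk).1) *m rho *m G (unidx ll).1) (unidx kk).2 (unidx ll).2.

Lemma blkN k n rho (G : 'I_k -> 'M[C]_n) i j : blk (Nmat rho G) i j = adj (G i) *m rho *m G j.
Proof. by apply/matrixP => a b; rewrite !mxE !mxtens_indexK. Qed.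

Lemma Nmat_psd k n rho (G : 'I_k -> 'M[C]_n) : psd rho -> psd (Nmat rho G).
Proof.
move=> prho; have hr : adj rho = rho by case: prho.
split.
  apply/matrixP => kk ll.
  case: (mxtens_indexP kk) => i a; case: (mxtens_indexP ll) => j b.
  have e k1 l1 : Nmat rho G k1 l1 =
    (adj (G (unidx k1).1) *m rho *m G (unidx l1).1) (unidx k1).2 (unidx l1).2.
    by rewrite mxE.
  by rewrite adjE !e !mxtens_indexK /= -adjE !adjM adjK hr mulmxA.
move=> v.
pose w := \sum_j G j *m vblk v j.
have := psd_tr w prho.
have -> : adj w *m rho *m w = \sum_i \sum_j adj (vblk v i) *m (adj (G i) *m rho *m G j) *m vblk v j.
  rewrite /w adj_sum mulmx_suml mulmx_suml; apply: eq_bigr => i _.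
  rewrite mulmx_sumr; apply: eq_bigr => j _; by rewrite adjM !mulmxA.
rewrite -tr1E QB raddf_sum /=; congr (0 <= _); apply: eq_bigr => i _.
rewrite raddf_sum; apply: eq_bigr => j _; by rewrite blkN.
Qed.


Definition adjm n n' (Phi : 'M[C]_n -> 'M[C]_n') (W : 'M[C]_n') : 'M[C]_n :=
  \matrix_(b, a) \tr (Phi (delta_mx a b) *m W).

Lemma linE n n' (Phi : {linear 'M[C]_n -> 'M[C]_n'}) (Z : 'M[C]_n) :
  Phi Z = \sum_i \sum_j Z i j *: Phi (delta_mx i j).
Proof.
rewrite {1}(matrix_sum_delta Z) linear_sum; apply: eq_bigr => i _.
rewrite linear_sum; apply: eq_bigr => j _; by rewrite linearZ.
Qed.

Lemma linEE n n' (Phi : {linear 'M[C]_n -> 'M[C]_n'}) (Z : 'M[C]_n) a b :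
  Phi Z a b = \sum_i \sum_j Z i j * Phi (delta_mx i j) a b.
Proof.
rewrite linE summxE; apply: eq_bigr => i _; rewrite summxE; apply: eq_bigr => j _.
by rewrite mxE.
Qed.

Lemma adjmP n n' (Phi : {linear 'M[C]_n -> 'M[C]_n'}) (Z : 'M[C]_n) (W : 'M[C]_n') :
  \tr (Phi Z *m W) = \tr (Z *m adjm Phi W).
Proof.
rewrite linE mulmx_suml raddf_sum /=; rewrite {2}/mxtrace; apply: eq_bigr => i _.
rewrite mulmx_suml raddf_sum /= mxE; apply: eq_bigr => j _.
by rewrite -scalemxAl mxtraceZ mxE.
Qed.

Lemma one_psd n : psd (1 : 'M[C]_n).
Proof.
split; first exact: adj1.
move=> v; rewrite mulmx1 mxE; apply: sumr_ge0 => k _.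
by rewrite adjE mulrC mulcJ_ge0.
Qed.

Definition G2 n (A B : 'M[C]_n) (i : 'I_2) : 'M[C]_n := if i == ord0 then A else B.

Lemma herm_pres dA dA' (Phi : {linear 'M[C]_dA -> 'M[C]_dA'}) :
  completely_positive Phi -> forall B, Phi (adj B) = adj (Phi B).
Proof.
move=> cp B.
have [h _] := cp _ _ (Nmat_psd (G2 1 B) (@one_psd dA)).
apply/matrixP => a b.
have := congr1 (fun M : 'M[C]_(2 * dA') => M (tidx (ord_max : 'I_2, a)) (tidx (ord0 : 'I_2, b))) h.
rewrite /= adjE !amplE !blkN /G2 /= adj1 !mulmx1 mul1mx => <-.
by rewrite adjE.
Qed.

Lemma adjm_adj n n' (Phi : {linear 'M[C]_n -> 'M[C]_n'}) (W : 'M[C]_n') :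
  completely_positive Phi -> adjm Phi (adj W) = adj (adjm Phi W).
Proof.
move=> cp; apply/matrixP => b a; rewrite adjE !mxE -tr_adj adjM.
by rewrite -herm_pres // adj_delta mxtrace_mulC.
Qed.

Lemma KS dA dA' (Phi : {linear 'M[C]_dA -> 'M[C]_dA'}) (rho : 'M[C]_dA) (W : 'M[C]_dA') :
  completely_positive Phi -> trace_preserving Phi -> psd rho ->
  \tr (adj (adjm Phi W) *m rho *m adjm Phi W) <= \tr (adj W *m Phi rho *m W).
Proof.
move=> cp tp prho; set Z := adjm Phi W.
have hr : adj rho = rho by case: prho.
have pM := cp _ _ (Nmat_psd (G2 1 Z) prho).
pose V : 'M[C]_(2 * dA', dA') := \matrix_(kk, c)
  (if (unidx kk).1 == ord0 then - W (unidx kk).2 c else ((unidx kk).2 == c)%:R).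
have := psd_tr V pM; rewrite QB.
rewrite !big_ord_recl !big_ord0 !addr0.
have v0 : vblk V ord0 = - W by apply/matrixP => a c; rewrite !mxE mxtens_indexK.
have v1 : vblk V (lift ord0 ord0) = 1 by apply/matrixP => a c; rewrite !mxE mxtens_indexK.
rewrite v0 v1 !blk_ampl !blkN /G2 /= adj1 adjN !mul1mx !mulmx1 !mulNmx !mulmxN opprK.
rewrite adj1 !mul1mx !raddfN /= tp.
have t0 : 0 <= \tr (adj Z *m rho *m Z) by apply: psd_tr.
have e1 : \tr (Phi (adj Z *m rho) *m W) = \tr (adj Z *m rho *m Z) by rewrite adjmP.
have e2 : \tr (adj W *m Phi (rho *m Z)) = \tr (adj Z *m rho *m Z).
  have -> : rho *m Z = adj (adj Z *m rho) by rewrite adjM adjK hr.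
  by rewrite herm_pres // -adjM tr_adj e1 conj_ge0_id.
rewrite e1 e2 => h; rewrite -subr_ge0; apply: (le_trans h).
rewrite le_eqVlt; apply/orP; left; apply/eqP; ring.
Qed.


Lemma idE n (i j : 'I_n) : (1 : 'M[C]_n) i j = (i == j)%:R.
Proof. by rewrite /GRing.one /= mxE. Qed.

Lemma sum_only k (F : 'I_k -> C) (i : 'I_k) :
  (forall j, j != i -> F j = 0) -> \sum_j F j = F i.
Proof.
move=> h; rewrite (bigD1 i) //= big1 ?addr0 // => j /h //.
Qed.

Lemma tr_delta n (k l : 'I_n) : \tr (delta_mx k l : 'M[C]_n) = (k == l)%:R.
Proof.
rewrite /mxtrace (sum_only (i := k)) ?mxE ?eqxx //.
by move=> j /negbTE ne; rewrite mxE ne.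
Qed.

Lemma tr_tens m n (A : 'M[C]_m) (B : 'M[C]_n) : \tr (A *t B) = \tr A * \tr B.
Proof.
rewrite /mxtrace sum_tidx mulr_suml; apply: eq_bigr => i _.
rewrite mulr_sumr; apply: eq_bigr => j _; by rewrite tensmxE.
Qed.

Lemma TT m n (M : 'M[C]_(m * n)) (X : 'M[C]_m) (Y : 'M[C]_n) :
  \tr (M *m (X *t Y)) = \sum_i \sum_k \sum_j \sum_l
     M (tidx (i, k)) (tidx (j, l)) * (X j i * Y l k).
Proof.
rewrite /mxtrace sum_tidx; apply: eq_bigr => i _; apply: eq_bigr => k _.
rewrite mxE sum_tidx; apply: eq_bigr => j _; apply: eq_bigr => l _.
by rewrite tensmxE.
Qed.

Lemma tr_ptrB m n (M : 'M[C]_(m * n)) : \tr (ptrB m n M) = \tr M.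
Proof. by rewrite {2}/mxtrace sum_tidx; apply: eq_bigr => i _; rewrite mxE. Qed.

Lemma tr_tens1 m n (M : 'M[C]_(m * n)) (Z : 'M[C]_m) :
  \tr (M *m (Z *t (1 : 'M[C]_n))) = \tr (ptrB m n M *m Z).
Proof.
rewrite TT /mxtrace; apply: eq_bigr => i _; rewrite exchange_big.
rewrite [in RHS]mxE.
apply: eq_bigr => j _; rewrite [ptrB _ _ _ _ _]mxE mulr_suml; apply: eq_bigr => k _.
rewrite (sum_only (i := k)) ?idE ?eqxx ?mulr1 //.
by move=> l /negbTE ne; rewrite idE ne mulr0 mulr0.
Qed.

Lemma tr_1tens m n (M : 'M[C]_(m * n)) (Z : 'M[C]_n) :
  \tr (M *m ((1 : 'M[C]_m) *t Z)) = \tr (ptrA m n M *m Z).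
Proof.
rewrite TT /mxtrace.
transitivity (\sum_i \sum_k \sum_l M (tidx (i, k)) (tidx (i, l)) * Z l k).
  apply: eq_bigr => i _; apply: eq_bigr => k _.
  rewrite (sum_only (i := i)).
    by under eq_bigr => l _ do rewrite idE eqxx mul1r.
  by move=> j /negbTE ne; apply: big1 => l _; rewrite idE ne mul0r mulr0.
rewrite exchange_big; apply: eq_bigr => k _.
rewrite exchange_big [in RHS]mxE; apply: eq_bigr => l _.
by rewrite [ptrA _ _ _ _ _]mxE mulr_suml.
Qed.

Lemma tmapE dA dB dA' dB' (Phi : 'M[C]_dA -> 'M[C]_dA') (Psi : 'M[C]_dB -> 'M[C]_dB')
  (M : 'M[C]_(dA * dB)) a b c d :
  tensmap Phi Psi M (tidx (a, b)) (tidx (c, d)) =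
  \sum_i \sum_j \sum_k \sum_l M (tidx (i, k)) (tidx (j, l)) *
     (Phi (delta_mx i j) a c * Psi (delta_mx k l) b d).
Proof.
rewrite /tensmap summxE; apply: eq_bigr => i _; rewrite summxE; apply: eq_bigr => j _.
rewrite summxE; apply: eq_bigr => k _; rewrite summxE; apply: eq_bigr => l _.
by rewrite mxE tensmxE.
Qed.

Lemma ptrB_tmap dA dB dA' dB' (Phi : {linear 'M[C]_dA -> 'M[C]_dA'})
  (Psi : {linear 'M[C]_dB -> 'M[C]_dB'}) (M : 'M[C]_(dA * dB)) :
  trace_preserving Psi -> ptrB dA' dB' (tensmap Phi Psi M) = Phi (ptrB dA dB M).
Proof.
move=> tp; apply/matrixP => a c; rewrite mxE linEE.
under eq_bigr => b _ do rewrite tmapE.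
rewrite exchange_big; apply: eq_bigr => i _.
rewrite exchange_big; apply: eq_bigr => j _.
rewrite mxE mulr_suml exchange_big; apply: eq_bigr => k _.
rewrite exchange_big (sum_only (i := k)).
  rewrite -mulr_sumr; congr (_ * _); rewrite -mulr_sumr.
  have := tp (delta_mx k k); rewrite tr_delta eqxx /mxtrace => ->.
  by rewrite mulr1.
move=> l ne; rewrite -!mulr_sumr.
have := tp (delta_mx k l); rewrite tr_delta eq_sym (negbTE ne) /mxtrace => ->.
by rewrite !mulr0.
Qed.


Lemma ptrA_tmap dA dB dA' dB' (Phi : {linear 'M[C]_dA -> 'M[C]_dA'})
  (Psi : {linear 'M[C]_dB -> 'M[C]_dB'}) (M : 'M[C]_(dA * dB)) :
  trace_preserving Phi -> ptrA dA' dB' (tensmap Phi Psi M) = Psi (ptrA dA dB M).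
Proof.
move=> tp; apply/matrixP => b d; rewrite mxE linEE.
under eq_bigr => a _ do rewrite tmapE.
have h i j : \sum_a \sum_k \sum_l M (tidx (i, k)) (tidx (j, l)) *
     (Phi (delta_mx i j) a a * Psi (delta_mx k l) b d) =
   (i == j)%:R * \sum_k \sum_l M (tidx (i, k)) (tidx (j, l)) * Psi (delta_mx k l) b d.
  rewrite mulr_sumr exchange_big; apply: eq_bigr => k _.
  rewrite mulr_sumr exchange_big; apply: eq_bigr => l _.
  rewrite -mulr_sumr -mulr_suml.
  have := tp (delta_mx i j); rewrite tr_delta /mxtrace => ->.
  by rewrite mulrCA mulrA.
transitivity (\sum_i \sum_k \sum_l M (tidx (i, k)) (tidx (i, l)) * Psi (delta_mx k l) b d).
  rewrite exchange_big; apply: eq_bigr => i _.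
  rewrite exchange_big (sum_only (i := i)); first by rewrite h eqxx mul1r.
  by move=> j ne; rewrite h eq_sym (negbTE ne) mul0r.
rewrite exchange_big; apply: eq_bigr => k _.
rewrite exchange_big; apply: eq_bigr => l _.
by rewrite mxE mulr_suml.
Qed.

Definition swapmx m n (M : 'M[C]_(m * n)) : 'M[C]_(n * m) :=
  \matrix_(k, l) M (tidx ((unidx k).2, (unidx k).1)) (tidx ((unidx l).2, (unidx l).1)).

Lemma swapE m n (M : 'M[C]_(m * n)) a b c d :
  swapmx M (tidx (a, b)) (tidx (c, d)) = M (tidx (b, a)) (tidx (d, c)).
Proof. by rewrite mxE !mxtens_indexK. Qed.

Lemma sum_tidx' (V : nmodType) m n (F : 'I_(m * n) -> V) :
  \sum_k F k = \sum_(j < n) \sum_(i < m) F (tidx (i, j)).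
Proof. by rewrite sum_tidx exchange_big. Qed.

Lemma swap_psd m n (M : 'M[C]_(m * n)) : psd M -> psd (swapmx M).
Proof.
move=> pM; split.
  apply/matrixP => k l.
  case: (mxtens_indexP k) => a b; case: (mxtens_indexP l) => c d.
  by rewrite adjE !swapE -(psd_herm pM).
move=> v; case: pM => _ /(_ (\matrix_(k, c) v (tidx ((unidx k).2, (unidx k).1)) c)).
rewrite !quadE; congr (0 <= _).
rewrite sum_tidx' [in RHS]sum_tidx; apply: eq_bigr => b _; apply: eq_bigr => a _.
rewrite sum_tidx' [in RHS]sum_tidx; apply: eq_bigr => d _; apply: eq_bigr => c _.
by rewrite !mxE !mxtens_indexK.
Qed.

Lemma tmap_swap dA dB dA' dB' (Phi : {linear 'M[C]_dA -> 'M[C]_dA'})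
  (Psi : {linear 'M[C]_dB -> 'M[C]_dB'}) (M : 'M[C]_(dA * dB)) :
  tensmap Phi Psi M = swapmx (ampl Phi (swapmx (ampl Psi M))).
Proof.
apply/matrixP => k l.
case: (mxtens_indexP k) => a b; case: (mxtens_indexP l) => c d.
rewrite tmapE swapE amplE [in RHS]linEE; apply: eq_bigr => i _; apply: eq_bigr => j _.
rewrite [blk _ _ _ _ _]mxE swapE amplE [in RHS](linEE Psi) mulr_suml; apply: eq_bigr => k' _.
rewrite mulr_suml; apply: eq_bigr => l' _.
by rewrite mxE mulrAC -mulrA.
Qed.

Lemma tmap_density dA dB dA' dB' (Phi : {linear 'M[C]_dA -> 'M[C]_dA'})
  (Psi : {linear 'M[C]_dB -> 'M[C]_dB'}) (M : 'M[C]_(dA * dB)) :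
  completely_positive Phi -> trace_preserving Phi ->
  completely_positive Psi -> trace_preserving Psi ->
  density M -> density (tensmap Phi Psi M).
Proof.
move=> cp1 tp1 cp2 tp2 [pM tM]; split.
  by rewrite tmap_swap; apply/swap_psd/cp1/swap_psd/cp2.
by rewrite -tr_ptrB ptrB_tmap // tp1 tr_ptrB.
Qed.


Lemma cs_scalar (a b g : C) : 0 <= a -> 0 <= b ->
  (forall t : C, 0 <= a - t * g^*%C - t^*%C * g + t * t^*%C * b) ->
  complex.Re g ^+ 2 + complex.Im g ^+ 2 <= complex.Re a * complex.Re b.
Proof.
case: a => A A'; case: b => B B'; case: g => x y /=.
rewrite !lecE /= => /andP [/eqP eA hA] /andP [/eqP eB hB] h.
have key s : 0 <= A - 2 * s * (x ^+ 2 + y ^+ 2) + s ^+ 2 * (x ^+ 2 + y ^+ 2) * B.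
  have := h ((s * x) +i* (s * y))%C; rewrite lecE /= => /andP [_] H.
  apply: le_trans H _; rewrite le_eqVlt; apply/orP; left; apply/eqP; rewrite eB; ring.
set G := x ^+ 2 + y ^+ 2.
rewrite -/G in key.
have G0 : 0 <= G by rewrite /G addr_ge0 // sqr_ge0.
have [B0|Bp] := eqVneq B 0.
  rewrite B0 mulr0.
  have [Gz|Gp] := eqVneq G 0; first by rewrite Gz.
  have := key ((A + 1) / (2 * G)); rewrite B0 mulr0 addr0.
  have -> : 2 * ((A + 1) / (2 * G)) * G = A + 1.
    by field.
  lra.
have Bp' : 0 < B by rewrite lt_def Bp hB.
have := key B^-1.
have e1 : B^-1 ^+ 2 * G * B = B^-1 * G by field.
have e2 : B * (B^-1 * G) = G by field.
rewrite e1 => H.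
have H2 : 0 <= B * (A - 2 * B^-1 * G + B^-1 * G) by apply: mulr_ge0; lra.
have : B * (A - 2 * B^-1 * G + B^-1 * G) = B * A - G.
  by field.
move=> e; rewrite e in H2; lra.
Qed.


Lemma CSmx n (T P Q : 'M[C]_n) : psd T ->
  complex.Re (\tr (adj Q *m T *m P)) ^+ 2 + complex.Im (\tr (adj Q *m T *m P)) ^+ 2 <=
  complex.Re (\tr (adj P *m T *m P)) * complex.Re (\tr (adj Q *m T *m Q)).
Proof.
move=> pT; have hT : adj T = T by case: pT.
apply: cs_scalar; try exact: psd_tr.
move=> t; have := psd_tr (P - t *: Q) pT.
have ec : (\tr (adj Q *m T *m P))^*%C = \tr (adj P *m T *m Q).
  by rewrite -tr_adj !adjM adjK hT mulmxA.
rewrite ec adjD adjN adjZ !mulmxDl !mulmxDr !mulNmx !mulmxN.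
rewrite -!scalemxAl -!scalemxAr !raddfD !raddfN /= !mxtraceZ.
move=> H; apply: le_trans H _; rewrite le_eqVlt; apply/orP; left; apply/eqP; ring.
Qed.


Lemma tr_quad_cyc n m (A : 'M[C]_n) (X : 'M[C]_(n, m)) :
  \tr (A *m (X *m adj X)) = \tr (adj X *m A *m X).
Proof. by rewrite mulmxA mxtrace_mulC mulmxA. Qed.

Lemma ptrB_psd m n (M : 'M[C]_(m * n)) : psd M -> psd (ptrB m n M).
Proof.
move=> pM; split.
  apply/matrixP => i j; rewrite adjE !mxE rmorph_sum; apply: eq_bigr => k _.
  by rewrite [RHS](psd_herm pM).
move=> v; rewrite -tr1E -tr_quad_cyc -tr_tens1.
rewrite -[(1 : 'M[C]_n)]mulmx1 -tensmx_mul.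
have -> : (adj v *t (1%:M : 'M[C]_n)) = adj (v *t (1 : 'M[C]_n)) by rewrite adj_tens adj1.
rewrite tr_quad_cyc; exact: psd_tr.
Qed.

Lemma ptrA_psd m n (M : 'M[C]_(m * n)) : psd M -> psd (ptrA m n M).
Proof.
move=> pM; split.
  apply/matrixP => i j; rewrite adjE !mxE rmorph_sum; apply: eq_bigr => k _.
  by rewrite [RHS](psd_herm pM).
move=> v; rewrite -tr1E -tr_quad_cyc -tr_1tens.
rewrite -[(1 : 'M[C]_m)]mulmx1 -tensmx_mul.
have -> : ((1%:M : 'M[C]_m) *t adj v) = adj ((1 : 'M[C]_m) *t v) by rewrite adj_tens adj1.
rewrite tr_quad_cyc; exact: psd_tr.
Qed.

Lemma CS_tens m n (M : 'M[C]_(m * n)) (X : 'M[C]_m) (Y : 'M[C]_n) : psd M ->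
  complex.Re (\tr (M *m (X *t adj Y))) ^+ 2 + complex.Im (\tr (M *m (X *t adj Y))) ^+ 2 <=
  complex.Re (\tr (ptrB m n M *m (X *m adj X))) * complex.Re (\tr (ptrA m n M *m (Y *m adj Y))).
Proof.
move=> pM; have := CSmx (X *t (1 : 'M[C]_n)) ((1 : 'M[C]_m) *t Y) pM.
have -> : \tr (M *m (X *t adj Y)) = \tr (adj (1 *t Y) *m M *m (X *t 1)).
  rewrite [RHS]mxtrace_mulC mulmxA [RHS]mxtrace_mulC adj_tens adj1 tensmx_mul.
  by rewrite mul1mx mulmx1.
rewrite -tr_tens1 -tr_1tens -!tr_quad_cyc !adj_tens !adj1 !tensmx_mul !mulmx1.
done.
Qed.

Lemma trans_val dA dB dA' dB' (Phi : {linear 'M[C]_dA -> 'M[C]_dA'})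
  (Psi : {linear 'M[C]_dB -> 'M[C]_dB'}) (M : 'M[C]_(dA * dB)) (A : 'M[C]_dA') (B : 'M[C]_dB') :
  \tr (tensmap Phi Psi M *m (A *t B)) = \tr (M *m (adjm Phi A *t adjm Psi B)).
Proof.
rewrite [RHS]TT /tensmap mulmx_suml raddf_sum /=; apply: eq_bigr => i _.
rewrite mulmx_suml raddf_sum /= [RHS]exchange_big; apply: eq_bigr => j _.
rewrite mulmx_suml raddf_sum /=; apply: eq_bigr => k _.
rewrite mulmx_suml raddf_sum /=; apply: eq_bigr => l _.
rewrite -scalemxAl mxtraceZ tensmx_mul tr_tens !mxE.
done.
Qed.


Definition mcset dA dB (rho : 'M[C]_(dA * dB)) : set R :=
  [set r : R | exists (X : 'M[C]_dA) (Y : 'M[C]_dB),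
     [/\ \tr (ptrB dA dB rho *m X) = 0, \tr (ptrA dA dB rho *m Y) = 0,
         \tr (ptrB dA dB rho *m (X *m adj X)) = 1, \tr (ptrA dA dB rho *m (Y *m adj Y)) = 1
       & real_complex R r = `|\tr (rho *m (X *t adj Y))|]].

Lemma maxcorrE dA dB (rho : 'M[C]_(dA * dB)) : maxcorr dA dB rho = sup (mcset rho).
Proof. by []. Qed.

Lemma normC_sqrt (z : C) (r : R) : real_complex R r = `|z| ->
  r = Num.sqrt (complex.Re z ^+ 2 + complex.Im z ^+ 2).
Proof. by rewrite normc_def => /complexI. Qed.

Lemma mcset_bound dA dB (rho : 'M[C]_(dA * dB)) r : psd rho -> mcset rho r -> 0 <= r <= 1.
Proof.
move=> pr [X [Y [h1 h2 h3 h4 /normC_sqrt ->]]].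
rewrite sqrtr_ge0 /= -sqrtr1 ler_sqrt //.
have := CS_tens X Y pr; rewrite h3 h4 /= mulr1 //.
Qed.

Lemma mcset_ub dA dB (rho : 'M[C]_(dA * dB)) : psd rho -> has_ubound (mcset rho).
Proof. by move=> pr; exists 1 => r /(mcset_bound pr) /andP []. Qed.

Lemma mc_ub dA dB (rho : 'M[C]_(dA * dB)) r : psd rho -> mcset rho r -> r <= maxcorr dA dB rho.
Proof. by move=> pr hr; apply: ub_le_sup => //; exact: mcset_ub. Qed.

Lemma mc_ge0 dA dB (rho : 'M[C]_(dA * dB)) : psd rho -> 0 <= maxcorr dA dB rho.
Proof.
move=> pr; have [[r hr]|ne] := pselect (exists r, mcset rho r).
  apply: le_trans (mc_ub pr hr); by case/andP: (mcset_bound pr hr).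
rewrite maxcorrE (_ : mcset rho = set0) ?sup0 //.
by apply/seteqP; split => // x hx; exfalso; apply: ne; exists x.
Qed.


Lemma ge0_real (z : C) : 0 <= z -> z = real_complex R (complex.Re z).
Proof. by case: z => a b; rewrite lecE /= => /andP [/eqP -> _]. Qed.

Lemma mc_mono dA dB dA' dB' (Phi : {linear 'M[C]_dA -> 'M[C]_dA'})
  (Psi : {linear 'M[C]_dB -> 'M[C]_dB'}) (tau : 'M[C]_(dA * dB)) :
  completely_positive Phi -> trace_preserving Phi ->
  completely_positive Psi -> trace_preserving Psi ->
  density tau -> maxcorr dA' dB' (tensmap Phi Psi tau) <= maxcorr dA dB tau.
Proof.
move=> cp1 tp1 cp2 tp2 [pt tt].
have m0 := mc_ge0 pt.
rewrite [maxcorr dA' dB' _]maxcorrE.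
have [[r0 hr0]|ne] := pselect (exists r, mcset (tensmap Phi Psi tau) r); last first.
  rewrite (_ : mcset _ = set0) ?sup0 //.
  by apply/seteqP; split => // x hx; exfalso; apply: ne; exists x.
apply: ge_sup; first by exists r0.
move=> r [X' [Y' [h1 h2 h3 h4 hv]]].
rewrite ptrB_tmap // in h1 h3; rewrite ptrA_tmap // in h2 h4.
set rA := ptrB dA dB tau in h1 h3; set rB := ptrA dA dB tau in h2 h4.
have prA : psd rA by exact: ptrB_psd.
have prB : psd rB by exact: ptrA_psd.
set X := adjm Phi X'; set Y := adjm Psi Y'.
have c1 : \tr (rA *m X) = 0 by rewrite -adjmP.
have c2 : \tr (rB *m Y) = 0 by rewrite -adjmP.
have ev : \tr (tensmap Phi Psi tau *m (X' *t adj Y')) = \tr (tau *m (X *t adj Y)).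
  by rewrite trans_val adjm_adj.
rewrite ev in hv.
set a := \tr (rA *m (X *m adj X)); set b := \tr (rB *m (Y *m adj Y)).
have a0 : 0 <= a by rewrite /a tr_quad_cyc; exact: psd_tr.
have b0 : 0 <= b by rewrite /b tr_quad_cyc; exact: psd_tr.
have a1 : a <= 1 by rewrite -h3 /a !tr_quad_cyc; exact: KS.
have b1 : b <= 1 by rewrite -h4 /b !tr_quad_cyc; exact: KS.
have cs := CS_tens X Y pt; rewrite -/rA -/rB -/a -/b in cs.
have ea := ge0_real a0; have eb := ge0_real b0.
set A := complex.Re a in ea cs; set B := complex.Re b in eb cs.
have A0 : 0 <= A by rewrite -ler0c -ea.
have B0 : 0 <= B by rewrite -ler0c -eb.
have A1 : A <= 1 by rewrite -lecR -ea.
have B1 : B <= 1 by rewrite -lecR -eb.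
set g := \tr (tau *m (X *t adj Y)) in hv cs.
have er := normC_sqrt hv.
set s := _ + _ in er cs.
have s0 : 0 <= s by rewrite /s addr_ge0 // sqr_ge0.
have [Az|Ap] := eqVneq A 0.
  rewrite er (_ : s = 0) ?sqrtr0 //; apply/eqP; rewrite eq_le s0 andbT.
  by move: cs; rewrite Az mul0r.
have [Bz|Bp] := eqVneq B 0.
  rewrite er (_ : s = 0) ?sqrtr0 //; apply/eqP; rewrite eq_le s0 andbT.
  by move: cs; rewrite Bz mulr0.
have Ap' : 0 < A by rewrite lt_def Ap A0.
have Bp' : 0 < B by rewrite lt_def Bp B0.
set sA := Num.sqrt A; set sB := Num.sqrt B.
have sAp : 0 < sA by rewrite sqrtr_gt0.
have sBp : 0 < sB by rewrite sqrtr_gt0.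
have sA2 : sA ^+ 2 = A by rewrite sqr_sqrtr.
have sB2 : sB ^+ 2 = B by rewrite sqr_sqrtr.
set ca := sA^-1; set cb := sB^-1.
have ca0 : 0 <= ca by rewrite invr_ge0 ltW.
have cb0 : 0 <= cb by rewrite invr_ge0 ltW.
have hm : mcset tau (ca * cb * r).
  exists (real_complex R ca *: X), (real_complex R cb *: Y); split.
  - by rewrite -scalemxAr mxtraceZ c1 mulr0.
  - by rewrite -scalemxAr mxtraceZ c2 mulr0.
  - rewrite adjZ conjc_real -scalemxAl -scalemxAr -scalemxAr !mxtraceZ -scalemxAr mxtraceZ -/rA -/a ea.
    rewrite -!rmorphM /=; congr (real_complex R _).
    rewrite /ca -sA2; field; by rewrite gt_eqF.
  - rewrite adjZ conjc_real -scalemxAl -scalemxAr -scalemxAr !mxtraceZ -scalemxAr mxtraceZ -/rB -/b eb.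
    rewrite -!rmorphM /=; congr (real_complex R _).
    rewrite /cb -sB2; field; by rewrite gt_eqF.
  - rewrite adjZ conjc_real tensZl tensZr -!scalemxAr !mxtraceZ -/g.
    rewrite !normrM -hv !ger0_norm ?ler0c // -!rmorphM /=.
    by rewrite mulrA.
have := mc_ub pt hm => hle.
have e : r = sA * sB * (ca * cb * r) by rewrite /ca /cb; field; rewrite !gt_eqF.
have sA1 : sA <= 1 by rewrite /sA -sqrtr1 ler_sqrt.
have sB1 : sB <= 1 by rewrite /sB -sqrtr1 ler_sqrt.
have q0 : 0 <= ca * cb * r.
  by rewrite !mulr_ge0 // er sqrtr_ge0.
have p1 : sA * sB <= 1 by rewrite -(mulr1 1) ler_pM // ltW.
have p0 : 0 <= sA * sB by rewrite mulr_ge0 // ltW.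
rewrite e; move: hle q0 p1 p0; set q := ca * cb * r; set p := sA * sB.
move=> hle q0 p1 p0; nra.
Qed.


Lemma tmapD dA dB dA' dB' (Phi : 'M[C]_dA -> 'M[C]_dA') (Psi : 'M[C]_dB -> 'M[C]_dB')
  (M N : 'M[C]_(dA * dB)) :
  tensmap Phi Psi (M + N) = tensmap Phi Psi M + tensmap Phi Psi N.
Proof.
rewrite /tensmap -big_split; apply: eq_bigr => i _; rewrite -big_split; apply: eq_bigr => j _.
rewrite -big_split; apply: eq_bigr => k _; rewrite -big_split; apply: eq_bigr => l _.
by rewrite mxE scalerDl.
Qed.

Lemma tmapZ dA dB dA' dB' (Phi : 'M[C]_dA -> 'M[C]_dA') (Psi : 'M[C]_dB -> 'M[C]_dB')
  (c : C) (M : 'M[C]_(dA * dB)) :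
  tensmap Phi Psi (c *: M) = c *: tensmap Phi Psi M.
Proof.
rewrite /tensmap scaler_sumr; apply: eq_bigr => i _; rewrite scaler_sumr; apply: eq_bigr => j _.
rewrite scaler_sumr; apply: eq_bigr => k _; rewrite scaler_sumr; apply: eq_bigr => l _.
by rewrite mxE scalerA.
Qed.

Lemma tmap0 dA dB dA' dB' (Phi : 'M[C]_dA -> 'M[C]_dA') (Psi : 'M[C]_dB -> 'M[C]_dB') :
  tensmap Phi Psi (0 : 'M[C]_(dA * dB)) = 0 :> 'M[C]_(dA' * dB').
Proof.
rewrite /tensmap big1 // => i _; rewrite big1 // => j _; rewrite big1 // => k _.
by rewrite big1 // => l _; rewrite mxE scale0r.
Qed.

Lemma tmap_sum dA dB dA' dB' (Phi : 'M[C]_dA -> 'M[C]_dA') (Psi : 'M[C]_dB -> 'M[C]_dB')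
  n (c : 'I_n -> C) (T : 'I_n -> 'M[C]_(dA * dB)) :
  tensmap Phi Psi (\sum_(i < n) c i *: T i) = \sum_(i < n) c i *: tensmap Phi Psi (T i) :> 'M[C]_(dA' * dB').
Proof.
apply: (big_rec2 (fun x y => tensmap Phi Psi x = y)); first exact: tmap0.
by move=> i x y _ <-; rewrite tmapD tmapZ.
Qed.

End Q.

Unset Implicit Arguments.
Set Strict Implicit.

Theorem theorem4 (R : realType) (dA dB dA' dB' : nat)
  (rho : 'M[R[i]]_(dA * dB))
  (Phi : {linear 'M[R[i]]_dA -> 'M[R[i]]_dA'})
  (Psi : {linear 'M[R[i]]_dB -> 'M[R[i]]_dB'}) :
  density rho ->
  completely_positive Phi -> trace_preserving Phi ->
  completely_positive Psi -> trace_preserving Psi ->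
  maxent dA' dB' (tensmap Phi Psi rho) <= maxent dA dB rho.
Proof.
move=> dr cp1 tp1 cp2 tp2.
rewrite /maxent; apply: lb_le_inf.
  exists (\big[Num.max/0]_(i < 1) maxcorr dA dB rho).
  exists 1%N, (fun _ => 1), (fun _ => rho); split => //.
  by rewrite big_ord1 rmorph1 scale1r.
move=> t [n [p [tau [hp ht hs ->]]]].
have lb : lbound [set t : R | exists (n : nat) (p : 'I_n -> R) (tau : 'I_n -> 'M[R[i]]_(dA' * dB')),
     [/\ forall i, 0 <= p i, forall i, density (tau i),
         tensmap Phi Psi rho = \sum_(i < n) (real_complex R (p i)) *: tau i
       & t = \big[Num.max/0]_(i < n) maxcorr dA' dB' (tau i)]] 0.
  move=> x [n' [p' [tau' [_ _ _ ->]]]].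
  by apply: (big_rec (fun x => 0 <= x)) => // i y _ hy; rewrite le_max hy orbT.
apply: le_trans (ge_inf (ex_intro _ 0 lb) _) _.
  exists n, p, (fun i => tensmap Phi Psi (tau i)); split => //.
  - by move=> i; apply: tmap_density.
  - by rewrite hs tmap_sum.
apply: le_bigmax2 => i _; apply: mc_mono => //.
Qed.
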